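(* Define $c(2)=1$, $c(3)=2$, $c(4)=4$ and $c(n)=10-n$ for $n\ge 5$. For every $n\ge 2$ and every $\mathbf a\in\mathbb{R}^n$ with $N(\mathbf a)\ge 2$, $$Z(J_{n,2}J_{n,1}\mathbf a)\le \binom{n+1}{3}-nN(\mathbf a)+n+c(n).$$
   Context: For a real vector $\mathbf x$, $N(\mathbf x)$ and $Z(\mathbf x)$ denote the numbers of negative and zero components. For $d\ge 0$, $J_{n,d}$ is the matrix, with respect to the bases of degree-$d$ and degree-$(d+1)$ monomials in $x_1,\dots,x_n$ in left lexicographic order, of the linear map $A(x)\mapsto A(x)(x_1+\cdots+x_n)$. Thus $J_{n,2}J_{n,1}\mathbf a$ is the coefficient vector of $(a_1x_1+\cdots+a_nx_n)(x_1+\cdots+x_n)^2$. *)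

(* Defs.v *)
From HB Require Import structures.
From mathcomp Require Import all_boot all_order all_algebra.
From mathcomp Require Import reals.
Set Implicit Arguments. Unset Strict Implicit. Unset Printing Implicit Defensive.
Import Order.TTheory GRing.Theory Num.Theory.
Local Open Scope ring_scope.

(* Monomials in x_1..x_n are represented by exponent vectors
   m : {ffun 'I_n -> nat}; a coefficient vector (w.r.t. the monomial basis)
   is a function from exponent vectors to R (only its values on monomials of
   the relevant degree matter). *)
Definition expo (n : nat) := {ffun 'I_n -> nat}.

Definition evar (n : nat) (i : 'I_n) : expo n := [ffun j => nat_of_bool (j == i)].

(* m / x_i  (only used when m i > 0) *)
Definition ediv (n : nat) (m : expo n) (i : 'I_n) : expo n :=
  [ffun j => (m j - nat_of_bool (j == i))%N].

Definition linvec (R : ringType) (n : nat) (a : 'I_n -> R) : expo n -> R :=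
  fun m => \sum_(i < n) (if m == evar i then a i else 0).

(* The map J_{n,d}: A(x) |-> A(x)(x_1+...+x_n) on coefficient vectors:
   the coefficient of the monomial m in A(x)(x_1+...+x_n) is the sum over the
   variables x_i dividing m of the coefficient of m/x_i in A.  Entry (m', m) of
   the matrix J_{n,d} is 1 iff m' = m x_i for some i, and 0 otherwise. *)
Definition Jmul (R : ringType) (n : nat) (f : expo n -> R) : expo n -> R :=
  fun m => \sum_(i < n | (0 < m i)%N) f (ediv m i).

Definition Zdeg (R : ringType) (n d : nat) (v : expo n -> R) : nat :=
  #|[set m : {ffun 'I_n -> 'I_d.+1} |
      ((\sum_(i < n) (m i : nat))%N == d) && (v [ffun j => (m j : nat)] == 0)]|.

Definition Nneg (R : numDomainType) (n : nat) (a : 'I_n -> R) : nat :=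
  #|[set i : 'I_n | a i < 0]|.

Definition cst (n : nat) : int :=
  if n == 2%N then 1 else if n == 3%N then 2 else if n == 4%N then 4
  else 10%:Z - n%:Z.

(* Main.v *)
Require Import Defs.
From HB Require Import structures.
From mathcomp Require Import all_boot all_order all_algebra.
From mathcomp Require Import reals.
From mathcomp Require Import zify.
From mathcomp.algebra_tactics Require Import ring lra.
Set Implicit Arguments. Unset Strict Implicit. Unset Printing Implicit Defensive.
Import Order.TTheory GRing.Theory Num.Theory.
Local Open Scope ring_scope.
Ltac genb := repeat match goal with
  | |- context [nat_of_bool ?b] =>
    let x := fresh "bb" in
    have := leq_b1 b; move: (nat_of_bool b) => x
  end.

Fixpoint zc {R : numDomainType} (s : seq R) (d : nat) (t : R) : nat :=
  match s with
  | [::] => ((d == 0%N) && (t == 0) : nat)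
  | y :: s' => (\sum_(e < 4 | (e <= d)%N) zc s' (d - e) (t - (e : nat)%:R * y))%N
  end.

Definition Pz {R : numDomainType} (M : R) (c : seq R) : nat := (zc c 2 (-M) + zc c 1 (-(2%:R * M)))%N.

Ltac gl := genb; repeat match goal with
  | |- context [zc ?s ?d ?t] => move: (zc s d t) => ?
  | |- context [count ?a ?s] => move: (count a s) => ?
  | |- context [size ?s] => move: (size s) => ?
  | |- context [Pz ?M ?s] => move: (Pz M s) => ?
  end; intros; lia.

Section P1.
Context {R : realFieldType}.
Implicit Types (s l p c : seq R) (t x y M : R).

Lemma zc_cons y s d t :
  zc (y :: s) d t = (\sum_(e < 4 | (e <= d)%N) zc s (d - e) (t - (e : nat)%:R * y))%N.
Proof. by []. Qed.

Lemma zc0 s t : zc s 0 t = (t == 0).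
Proof.
elim: s t => [|y s IH] t /=; first by [].
rewrite big_mkcond !big_ord_recl big_ord0 /= IH mul0r subr0.
by rewrite !addn0.
Qed.

Lemma zc1_cons y s t : zc (y :: s) 1 t = (zc s 1 t + (t - y == 0)%R)%N.
Proof.
rewrite /= big_mkcond !big_ord_recl big_ord0 /= !zc0 mul0r subr0 mul1r.
by rewrite !addn0.
Qed.

Lemma zc2_cons y s t :
  zc (y :: s) 2 t = (zc s 2 t + zc s 1 (t - y)%R + (t - 2%:R * y == 0)%R)%N.
Proof.
rewrite /= big_mkcond !big_ord_recl big_ord0 /= !zc0 mul0r subr0 mul1r.
by rewrite !addn0 addnA.
Qed.

Lemma zc3_cons y s t :
  zc (y :: s) 3 t =
  (zc s 3 t + zc s 2 (t - y)%R + zc s 1 (t - 2%:R * y)%R + (t - 3%:R * y == 0)%R)%N.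
Proof.
rewrite /= big_mkcond !big_ord_recl big_ord0 /= !zc0 mul0r subr0 mul1r.
by rewrite !addn0 !addnA.
Qed.

Lemma zc1_count s t : zc s 1 t = count (fun v => v == t) s.
Proof.
elim: s => [|y s IH] /=; first by [].
rewrite -/(zc (y :: s) 1 t).
rewrite zc1_cons IH addnC subr_eq0.
by rewrite eq_sym.
Qed.

Lemma zc_swap s x y d t : zc [:: x, y & s] d t = zc [:: y, x & s] d t.
Proof.
rewrite /=.
have E : forall (u v : R),
  (\sum_(e1 < 4 | (e1 <= d)%N)
    \sum_(e2 < 4 | (e2 <= d - e1)%N) zc s (d - e1 - e2) (t - (e1:nat)%:R * u - (e2:nat)%:R * v))%N
  = (\sum_(e1 < 4) \sum_(e2 < 4)
      if (e1 + e2 <= d)%N then zc s (d - e1 - e2) (t - (e1:nat)%:R * u - (e2:nat)%:R * v) else 0)%N.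
  move=> u v; rewrite big_mkcond; apply: eq_bigr => e1 _ /=.
  case: ifP => h1.
    rewrite big_mkcond; apply: eq_bigr => e2 _.
    by have -> : ((e2 <= d - e1) = (e1 + e2 <= d))%N by lia.
  rewrite big1 // => e2 _.
  by have -> : ((e1 + e2 <= d) = false)%N by lia.
rewrite E E exchange_big /=; apply: eq_bigr => e2 _; apply: eq_bigr => e1 _.
by rewrite addnC subnAC addrAC.
Qed.

Lemma zc_rem s x : x \in s -> forall d t, zc s d t = zc (x :: rem x s) d t.
Proof.
elim: s => [|y s IH] // xin d t.
have -> : rem x (y :: s) = if y == x then s else y :: rem x s by [].
case: eqP => [->|nxy] //.
have xs : x \in s by move: xin; rewrite inE => /orP [/eqP/esym|] //.
rewrite -zc_swap zc_cons [in RHS]zc_cons; apply: eq_bigr => e _; exact: IH.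
Qed.

Lemma zc_perm s1 s2 : perm_eq s1 s2 -> forall d t, zc s1 d t = zc s2 d t.
Proof.
elim: s1 s2 => [|x s1 IH] s2 hp d t.
  by move: (perm_size hp) => /= /esym/size0nil ->.
have xin : x \in s2 by rewrite -(perm_mem hp) mem_head.
rewrite (zc_rem xin) /=; apply: eq_bigr => e _; apply: IH.
by rewrite -(perm_cons x) (perm_trans hp) // perm_to_rem.
Qed.


Lemma zc_pos s d t : (forall y, y \in s -> 0 <= y) -> t < 0 -> zc s d t = 0%N.
Proof.
elim: s d t => [|y s IH] d t hs ht /=.
  by rewrite (lt_eqF ht) andbF.
rewrite big1 // => e _; apply: IH.
  by move=> z zs; apply: hs; rewrite inE zs orbT.
have : 0 <= (e:nat)%:R * y by rewrite mulr_ge0 // hs // mem_head.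
lra.
Qed.

Lemma zc_neg s d t : (forall y, y \in s -> y < 0) -> 0 <= t -> (0 < d)%N -> zc s d t = 0%N.
Proof.
elim: s d t => [|y s IH] d t hs ht hd /=.
  by case: d hd.
have hy : y < 0 by apply: hs; rewrite mem_head.
have hs' : forall z, z \in s -> z < 0 by move=> z zs; apply: hs; rewrite inE zs orbT.
rewrite big1 // => e hed.
case: (ltnP e d) => hlt.
  apply: IH => //; last by rewrite subn_gt0.
  have : (e:nat)%:R * y <= 0 by rewrite mulr_ge0_le0 // ltW.
  lra.
have -> : (d - e = 0)%N by lia.
rewrite zc0.
have : (e:nat)%:R * y < 0 by rewrite pmulr_rlt0 // ltr0n; lia.
move=> h; have /gt_eqF -> : 0 < t - (e:nat)%:R * y by lra.
by [].
Qed.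

Lemma zc1_le s t : (zc s 1 t <= size s)%N.
Proof. by rewrite zc1_count count_size. Qed.

Lemma bin2S m : 'C(m.+2, 2) = ('C(m.+1, 2) + m.+1)%N.
Proof. by rewrite binS bin1. Qed.

Lemma zc2_le s t : (zc s 2 t <= 'C((size s).+1, 2))%N.
Proof.
elim: s t => [|y s IH] t; first by [].
rewrite zc2_cons /= bin2S.
have := IH t; have := zc1_le s (t - y); have := leq_b1 (t - 2%:R * y == 0).
gl.
Qed.


Lemma Pz_cons M y c : Pz M (y :: c) =
  (Pz M c + count (fun v => v == -M - y)%R c + (-M - 2%:R * y == 0)%R + (-(2%:R * M) - y == 0)%R)%N.
Proof. rewrite /Pz zc2_cons zc1_cons zc1_count; gl. Qed.

Lemma count_split (u : R) c :
  (count (fun v => v == u)%R c + count (fun v => v != u)%R c = size c)%N.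
Proof. exact: (count_predC (fun v => v == u)). Qed.

Lemma b12 M y : 0 < M -> ((-M - 2%:R * y == 0)%R + (-(2%:R * M) - y == 0)%R <= 1)%N.
Proof.
move=> hM; case: eqP => h1; case: eqP => h2 //=.
exfalso; lra.
Qed.

Lemma D0 M c : 0 < M -> (Pz M c <= 'C((size c).+1, 2))%N.
Proof.
move=> hM; elim: c => [|y c IH]; first by [].
rewrite Pz_cons /= bin2S.
move: IH; have := count_split (-M - y) c; have := b12 y hM; gl.
Qed.

Lemma Dneg M l p : 0 < M -> (forall y, y \in l -> y < 0) ->
  (forall y, y \in p -> 0 <= y) -> p != [::] ->
  (Pz M (l ++ p) + 'C((size p).+1, 2) + size l <= 'C((size (l ++ p)).+1, 2) + 1)%N.
Proof.
move=> hM hl hp pn.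
have [v vp] : exists v, v \in p by case: p pn {hp} => [|v p'] // _; exists v; rewrite mem_head.
have hv : 0 <= v by apply: hp.
have P0 : Pz M p = 0%N.
  by rewrite /Pz !zc_pos //; lra.
elim: l hl => [|y l IH] hl; first by rewrite /= P0; gl.
have hy : y < 0 by apply: hl; rewrite mem_head.
have hl' : forall z, z \in l -> z < 0 by move=> z zs; apply: hl; rewrite inE zs orbT.
have := IH hl'; rewrite cat_cons Pz_cons /= bin2S.
have := count_split (-M - y) (l ++ p); have := b12 y hM.
clear hl IH; case: l hl' => [|z l] hl'.
  rewrite /= P0; gl.
have Hc : (0 < count (fun v => v != -M - y)%R ([:: z & l] ++ p))%N ||
          ((-M - 2%:R * y == 0)%R + (-(2%:R * M) - y == 0)%R == 0)%N.
  case: (-M - 2%:R * y =P 0) => h1.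
    have hb2 : (-(2%:R * M) - y == 0) = false by apply/negbTE/eqP; lra.
    rewrite -has_count; apply/orP; left; apply/hasP; exists v.
      by rewrite mem_cat vp orbT.
    by apply/eqP; lra.
  case: (-(2%:R * M) - y =P 0) => h2; last by rewrite orbT.
  have hz : z < 0 by apply: hl'; rewrite mem_head.
  apply/orP; left; rewrite -has_count; apply/hasP; exists z; first by rewrite mem_head.
  by apply/eqP; lra.
move: Hc; gl.
Qed.

Lemma Dzero l p : (forall y, y \in l -> y < 0) -> (forall y, y \in p -> y = 0) ->
  (Pz 0 (l ++ p) + size l * (size p).+1 <= 'C((size (l ++ p)).+1, 2) + size p)%N.
Proof.
move=> hl hp.
elim: l hl => [|y l IH] hl /=.
  rewrite mul0n addn0 /Pz; have := zc2_le p (-0); have := zc1_le p (-(2%:R * 0)); gl.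
have hy : y < 0 by apply: hl; rewrite mem_head.
have hl' : forall z, z \in l -> z < 0 by move=> z zs; apply: hl; rewrite inE zs orbT.
have := IH hl'; rewrite Pz_cons /= bin2S.
have -> : count (fun v => v == -0 - y) (l ++ p) = 0%N.
  apply/eqP; rewrite -leqn0 leqNgt -has_count; apply/hasP => [[v]].
  rewrite mem_cat => /orP [/hl' vl|/hp ->] /eqP; lra.
have -> : (-0 - 2%:R * y == 0) = false by apply/negbTE/eqP; lra.
have -> : (-(2%:R * 0) - y == 0) = false by apply/negbTE/eqP; lra.
have := size_cat l p; rewrite /=; gl.
Qed.

Lemma exists_max s : s != [::] -> exists2 x, x \in s & forall y, y \in s -> y <= x.
Proof.
elim: s => [|y s IH] // _.
case: s IH => [|z s] IH.
  by exists y => [|w]; rewrite ?mem_head // inE => /eqP ->.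
case: IH => // x xin hx.
case: (lerP y x) => hyx.
  exists x; first by rewrite inE xin orbT.
  by move=> w; rewrite inE => /orP [/eqP ->|/hx].
exists y; first by rewrite mem_head.
move=> w; rewrite inE => /orP [/eqP ->|/hx] //; lra.
Qed.

End P1.
Definition Bnd (n k : nat) : int := ('C(n.+1, 3))%:Z - (n * k)%:Z + n%:Z + cst n.

Lemma bin3E n : ('C(n.+1, 3) * 6 = n.+1 * n * n.-1)%N.
Proof.
have := bin_ffact n.+1 3; rewrite !ffactnS ffactn0 !factS fact0 /= => ->.
by rewrite muln1 mulnA.
Qed.

Lemma bin2E n : ('C(n.+1, 2) * 2 = n.+1 * n)%N.
Proof.
have := bin_ffact n.+1 2; rewrite !ffactnS ffactn0 !factS fact0 /= => ->.
by rewrite muln1.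
Qed.

Lemma A1 n : (2 <= n)%N -> 0 <= Bnd n n.
Proof.
rewrite /Bnd /cst => hn.
case: (n =P 2%N) => [->|h2] //.
case: (n =P 3%N) => [->|h3] //.
case: (n =P 4%N) => [->|h4] //.
have := bin3E n.
have : (0 <= n * ((n - 5) * (n - 5)))%N by [].
move: ('C(n.+1,3)) => C.
nia.
Qed.

Lemma A2 n : (2 <= n)%N -> ('C(n.+1, 2))%:Z <= Bnd n.+1 n.
Proof.
rewrite /Bnd /cst => hn.
case: (n =P 2%N) => [->|h2] //.
case: (n =P 3%N) => [->|h3] //.
case: (n =P 4%N) => [->|h4] //.
case: (n =P 5%N) => [->|h5] //.
case: (n =P 6%N) => [->|h6] //.
have := bin3E n.+1; have := bin2E n.
have : (7 * (n.+1 * n) <= n.+1 * n * n)%N.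
  by rewrite mulnC leq_mul2l; apply/orP; right; lia.
have -> : (n.+1 == 2%N) = false by apply/eqP; lia.
have -> : (n.+1 == 3%N) = false by apply/eqP; lia.
have -> : (n.+1 == 4%N) = false by apply/eqP; lia.
move: ('C(n.+2,3)) ('C(n.+1,2)) => C D.
lia.
Qed.

Lemma cst_step n : (3 <= n)%N -> cst n <= cst n.+1 + 1.
Proof.
rewrite /cst => hn.
case: (n =P 3%N) => [->|h3] //.
case: (n =P 4%N) => [->|h4] //.
by repeat case: ifP => [/eqP ?|_]; try lia.
Qed.

Lemma A3 n k : (3 <= n)%N -> Bnd n k + ('C(n.+1, 2))%:Z - k%:Z <= Bnd n.+1 k.
Proof.
rewrite /Bnd => hn.
have := cst_step hn.
rewrite (binS n.+1 2).
move: (cst n) (cst n.+1) ('C(n.+1, 3)) ('C(n.+1, 2)) => c1 c2 C D.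
lia.
Qed.

Theorem main_seq {R : realFieldType} (s : seq R) :
  (2 <= size s)%N -> (2 <= count (fun v => v < 0)%R s)%N ->
  (zc s 3 0)%:Z <= Bnd (size s) (count (fun v => v < 0) s).
Proof.
move Hn: (size s) => n; elim: n s Hn => [|n IH] s Hn hn hk; first by [].
set k := count _ s.
have [allneg|notall] := boolP (k == n.+1).
  have hs : forall y, y \in s -> y < 0.
    move=> y ys; have : all (fun v => v < 0) s by rewrite all_count Hn.
    by move/allP/(_ y ys).
  rewrite zc_neg // (eqP allneg); exact: A1.
have hklt : (k < n.+1)%N by rewrite ltn_neqAle notall -Hn count_size.
have [v vs hv] : exists2 v, v \in s & 0 <= v.
  have : has (fun v => ~~ (v < 0)) s.
    have e : count (fun v => ~~ (v < 0)) s = count (predC (fun v => v < 0)) s by [].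
    rewrite has_count e; have := count_predC (fun v => v < 0) s.
    rewrite Hn -/k; move: (count (predC _) s) => c; lia.
  by case/hasP => v vs; rewrite -leNgt => hv; exists v.
have [x xs hx] : exists2 x, x \in s & forall y, y \in s -> y <= x.
  by apply: exists_max; apply/eqP => s0; rewrite s0 in vs.
have x0 : 0 <= x by apply: le_trans hv (hx v vs).
set b := rem x s.
have Ez : zc s 3 0 = (zc b 3 0 + Pz x b + (x == 0)%R)%N.
  rewrite (zc_rem xs) zc3_cons /Pz !sub0r !addnA; congr (_ + _)%N.
  by rewrite oppr_eq0 mulf_eq0 pnatr_eq0.
have Hb : size b = n by rewrite size_rem // Hn.
have Kb : count (fun v => v < 0) b = k.
  by rewrite /k (permP (perm_to_rem xs)) /= ltNge x0.
have [kn|kn] := eqVneq k n.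
  have hb : forall y, y \in b -> y < 0.
    move=> y ys; have : all (fun v => v < 0) b by rewrite all_count Hb Kb kn.
    by move/allP/(_ y ys).
  have z3 : zc b 3 0 = 0%N by apply: zc_neg.
  rewrite Ez z3 add0n kn.
  have n2 : (2 <= n)%N by rewrite -kn.
  have := A2 n2; have : (1 <= 'C(n.+1, 2))%N by rewrite bin_gt0; lia.
  case: (x =P 0) => [x00|xn0].
    rewrite x00 /Pz !zc_neg //; last by rewrite oppr0.
      by rewrite /=; move: ('C(n.+1, 2)) (Bnd n.+1 n) => C B; lia.
    by rewrite mulr0 oppr0.
  have xp : 0 < x by rewrite lt_def x0 andbT; apply/eqP.
  have := D0 b xp; rewrite Hb.
  move: (Pz x b) ('C(n.+1, 2)) (Bnd n.+1 n) => P C B; lia.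
have knlt : (k < n)%N by rewrite ltn_neqAle kn -Hb -Kb count_size.
have n3 : (3 <= n)%N.
  have hk2 : (2 <= k)%N by [].
  move: knlt hk2; clear; lia.
have IHb := IH b Hb (leq_trans (isT : (2 <= 3)%N) n3).
rewrite Kb in IHb; have {IHb}IHb := IHb hk.
set l := [seq v <- b | v < 0].
set p := [seq v <- b | ~~ (v < 0)].
have Hp : perm_eq (l ++ p) b by rewrite perm_filterC.
have HP : Pz x b = Pz x (l ++ p).
  by rewrite /Pz !(zc_perm Hp).
have Sl : size l = k by rewrite size_filter Kb.
have Sp : size p = (n - k)%N.
  have e : count (fun v => ~~ (v < 0)) b = count (predC (fun v => v < 0)) b by [].
  rewrite size_filter e; have := count_predC (fun v => v < 0) b; rewrite Hb Kb.
  move: (count (predC _) b) => c; lia.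
have Slp : size (l ++ p) = n by rewrite (perm_size Hp).
have hl : forall y, y \in l -> y < 0 by move=> y; rewrite mem_filter => /andP [].
have hp : forall y, y \in p -> 0 <= y by move=> y; rewrite mem_filter leNgt => /andP [].
have pn : p != [::] by rewrite -size_eq0 Sp; lia.
have := A3 k n3.
rewrite Ez HP.
case: (x =P 0) => [x00|xn0].
  have hp0 : forall y, y \in p -> y = 0.
    move=> y yp; apply/eqP; rewrite eq_le hp // andbT -x00 hx //.
    by move: yp; rewrite mem_filter => /andP [_ /mem_rem].
  rewrite x00 /=.
  have := Dzero hl hp0; rewrite Slp Sl Sp.
  have : (2 * (n - k) <= k * (n - k))%N by rewrite leq_mul2r hk orbT.
  move: (Pz 0 (l ++ p)) ('C(n.+1, 2)) (Bnd n.+1 k) (Bnd n k) (zc b 3 0) IHb => P C B B' Z IHb.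
  have hk2 : (2 <= k)%N by [].
  move: knlt hk2; clear -IHb; nia.
have xp : 0 < x by rewrite lt_def x0 andbT; apply/eqP.
rewrite /=.
have := Dneg xp hl hp pn; rewrite Slp Sl.
have : (1 <= 'C((size p).+1, 2))%N.
  case: (size p) Sp => [|m] Sp; first by lia.
  by rewrite bin2S; lia.
move: (Pz x (l ++ p)) ('C(n.+1, 2)) ('C((size p).+1, 2)) (Bnd n.+1 k) (Bnd n k) (zc b 3 0) IHb => P C C' B B' Z IHb.
lia.
Qed.

Definition G {R : numDomainType} (n : nat) (a : 'I_n -> R) (d : nat) (t : R) : nat :=
  (\sum_(m : {ffun 'I_n -> 'I_4})
     (((\sum_i (m i : nat)) == d) && (\sum_i (m i : nat)%:R * a i == t)%R : nat))%N.

Lemma Gzc {R : numDomainType} n (a : 'I_n -> R) d t :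
  G a d t = zc [seq a i | i <- enum 'I_n] d t.
Proof.
elim: n a d t => [|n IH] a d t.
  rewrite /G enum_ord0 /=.
  under eq_bigr do rewrite !big_ord0.
  by rewrite sum_nat_const card_ffun !card_ord /= mul1n eq_sym [0 == t]eq_sym.
pose h (p : 'I_4 * {ffun 'I_n -> 'I_4}) : {ffun 'I_n.+1 -> 'I_4} :=
  [ffun i => if unlift ord0 i is Some j then p.2 j else p.1].
pose g (m : {ffun 'I_n.+1 -> 'I_4}) : 'I_4 * {ffun 'I_n -> 'I_4} :=
  (m ord0, [ffun j => m (lift ord0 j)]).
have hK : cancel h g.
  move=> [e m']; rewrite /g /h /=; congr (_, _); first by rewrite ffunE unlift_none.
  by apply/ffunP => j; rewrite !ffunE liftK.
have gK : cancel g h.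
  move=> m; apply/ffunP => i; rewrite /g /h ffunE /=.
  by case: unliftP => [j ->|->]; rewrite ?ffunE.
rewrite /G (reindex h (onW_bij _ (Bijective hK gK))) /=.
transitivity (\sum_(e : 'I_4) \sum_(m' : {ffun 'I_n -> 'I_4})
   (((\sum_i (h (e, m') i : nat)) == d) && (\sum_i (h (e, m') i : nat)%:R * a i == t)%R : nat))%N.
  by rewrite pair_bigA; apply: eq_bigr => -[e m'] _.
rewrite enum_ordSl /= -map_comp [in RHS]big_mkcond /=.
apply: eq_bigr => e _.
have E1 : forall m', (\sum_i (h (e, m') i : nat) = e + \sum_j (m' j : nat))%N.
  by move=> m'; rewrite big_ord_recl /h !ffunE unlift_none; congr (_ + _)%N;
     apply: eq_bigr => j _; rewrite ffunE liftK.
have E2 : forall m', \sum_i (h (e, m') i : nat)%:R * a i =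
     (e : nat)%:R * a ord0 + \sum_j (m' j : nat)%:R * (a \o lift ord0) j.
  by move=> m'; rewrite big_ord_recl /h !ffunE unlift_none; congr (_ + _);
     apply: eq_bigr => j _; rewrite ffunE liftK.
under eq_bigr do rewrite E1 E2.
case: leqP => hed.
  rewrite -IH /G; apply: eq_bigr => m' _.
  congr (nat_of_bool _); congr (_ && _).
    apply/eqP/eqP => h1; lia.
  apply/eqP/eqP => H.
    by rewrite -H /= addrAC subrr add0r.
  by rewrite /= H addrC subrK.
rewrite big1 // => m' _.
have -> : (e + \sum_j (m' j : nat) == d)%N = false by apply/eqP; lia.
by [].
Qed.

Definition Tr (n : nat) (mu : expo n) (i j k : 'I_n) : bool :=
  [forall l, mu l == ((l == i) + (l == j) + (l == k))%N].

Lemma trE n (mu : expo n) i j k :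
  Tr mu i j k = [&& (0 < mu i)%N, (0 < ediv mu i j)%N & ediv (ediv mu i) j == evar k].
Proof.
apply/forallP/and3P.
  move=> H; have Hl := fun l => eqP (H l).
  split.
  - by rewrite Hl eqxx.
  - rewrite ffunE Hl eqxx; case: (j == i); case: (j == k) => //.
  - apply/eqP/ffunP => l; rewrite !ffunE Hl.
    by case: (l == i); case: (l == j); case: (l == k).
move=> [h1 h2 /eqP h3] l; apply/eqP.
have := congr1 (fun f : expo n => f l) h3; rewrite !ffunE.
rewrite ffunE in h2.
case: (eqVneq l i) => [eli|li].
  subst l; rewrite ?eqxx.
  case: (eqVneq i j) => [eij|ij].
    subst j; rewrite ?eqxx in h2 *; move: h2; rewrite /=; genb; lia.
  rewrite ?(negbTE ij); move: h1; rewrite /=; genb; lia.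
rewrite ?(negbTE li).
case: (eqVneq l j) => [elj|lj].
  subst l; rewrite ?eqxx ?(negbTE li) in h2 *; move: h2; rewrite /=; genb; lia.
rewrite ?(negbTE lj); rewrite /=; genb; lia.
Qed.


Lemma v_sum {R : numFieldType} n (a : 'I_n -> R) (mu : expo n) :
  Jmul (Jmul (linvec a)) mu = \sum_i \sum_j \sum_k (if Tr mu i j k then a k else 0).
Proof.
rewrite /Jmul big_mkcond; apply: eq_bigr => i _.
case: ifP => hi.
  rewrite big_mkcond; apply: eq_bigr => j _.
  case: ifP => hj.
    by rewrite /linvec; apply: eq_bigr => k _; rewrite trE hi hj.
  by rewrite big1 // => k _; rewrite trE hi hj.
by rewrite big1 // => j _; rewrite big1 // => k _; rewrite trE hi.
Qed.

Lemma TrC1 n (mu : expo n) i j k : Tr mu i j k = Tr mu k j i.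
Proof. by apply: eq_forallb => l; congr (_ == _); genb; lia. Qed.

Lemma TrC2 n (mu : expo n) i j k : Tr mu i j k = Tr mu i k j.
Proof. by apply: eq_forallb => l; congr (_ == _); genb; lia. Qed.

Lemma sum3_rev {R : nmodType} n (X : 'I_n -> 'I_n -> 'I_n -> R) :
  \sum_i \sum_j \sum_k X i j k = \sum_k \sum_j \sum_i X i j k.
Proof.
under eq_bigr do rewrite exchange_big.
rewrite exchange_big.
by under eq_bigr do rewrite exchange_big.
Qed.

Lemma sum_delta {R : numFieldType} n (a : 'I_n -> R) i :
  \sum_l ((l == i)%:R * a l) = a i.
Proof.
rewrite (bigD1 i) //= eqxx mul1r big1 ?addr0 // => l /negbTE ->.
by rewrite mul0r.
Qed.

Lemma le_sum1 (I : finType) (F : I -> nat) x : (F x <= \sum_i F i)%N.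
Proof. by rewrite (bigD1 x) //= leq_addr. Qed.

Lemma exists_pos n (f : expo n) : (0 < \sum_i f i)%N ->
  exists2 i, (0 < f i)%N & (\sum_l ediv f i l = (\sum_l f l) - 1)%N.
Proof.
move=> hs.
case: (pickP (fun i => 0 < f i)%N) => [i hi|h0]; last first.
  move: hs; rewrite big1 // => i _; move: (h0 i) => /= /negbT; rewrite lt0n negbK.
  by move/eqP.
exists i => //.
rewrite (bigD1 i) //= [in RHS](bigD1 i) //= ffunE eqxx.
have -> : (\sum_(l | l != i) ediv f i l = \sum_(l | l != i) f l)%N.
  by apply: eq_bigr => l /negbTE hl; rewrite ffunE hl subn0.
move: hi; rewrite /=; lia.
Qed.

Lemma coef_eq0 {R : numFieldType} n (a : 'I_n -> R) (mu : expo n) :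
  (\sum_i mu i = 3)%N ->
  (Jmul (Jmul (linvec a)) mu == 0) = (\sum_i (mu i)%:R * a i == 0).
Proof.
move=> hs; rewrite v_sum.
set A := \sum_i \sum_j \sum_k _.
set L := \sum_i _.
set N := (\sum_i \sum_j \sum_k (Tr mu i j k : nat))%N.
have eA1 : A = \sum_i \sum_j \sum_k (if Tr mu i j k then a i else 0).
  rewrite [RHS]sum3_rev; apply: eq_bigr => i _; apply: eq_bigr => j _.
  by apply: eq_bigr => k _; rewrite TrC1.
have eA2 : A = \sum_i \sum_j \sum_k (if Tr mu i j k then a j else 0).
  apply: eq_bigr => i _; rewrite [RHS]exchange_big; apply: eq_bigr => j _.
  by apply: eq_bigr => k _; rewrite TrC2.
have H3 : 3%:R * A = N%:R * L.
  have -> : 3%:R * A = A + A + A by ring.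
  rewrite {1}eA1 {2}eA2 /A -!big_split /= /N natr_sum mulr_suml.
  apply: eq_bigr => i _; rewrite -!big_split /= natr_sum mulr_suml.
  apply: eq_bigr => j _; rewrite -!big_split /= natr_sum mulr_suml.
  apply: eq_bigr => k _.
  case: ifP => T; last by rewrite !addr0 mul0r.
  rewrite mul1r /L.
  have Hl : forall l, mu l = ((l == i) + (l == j) + (l == k))%N.
    by move=> l; apply/eqP; move/forallP: T => /(_ l).
  under eq_bigr do rewrite Hl !natrD !mulrDl.
  by rewrite !big_split /= !sum_delta; ring.
have NP : (0 < N)%N.
  have [i hi si] := exists_pos (f := mu) (ltac:(by rewrite hs)).
  rewrite hs /= in si.
  have [j hj sj] := exists_pos (f := ediv mu i) (ltac:(by rewrite si)).
  rewrite si /= in sj.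
  have [k hk sk] := exists_pos (f := ediv (ediv mu i) j) (ltac:(by rewrite sj)).
  rewrite sj /= in sk.
  have ek : ediv (ediv mu i) j == evar k.
    apply/eqP/ffunP => l; rewrite [in RHS]ffunE.
    move: sj; rewrite (bigD1 k) //=.
    case: (eqVneq l k) => [->|lk]; first by lia.
    rewrite (bigD1 l) //=; lia.
  have Htr : Tr mu i j k by rewrite trE hi hj ek.
  apply: (leq_trans _ (le_sum1 _ i)).
  apply: (leq_trans _ (le_sum1 _ j)).
  apply: (leq_trans _ (le_sum1 _ k)).
  by rewrite Htr.
apply/eqP/eqP => h.
  move: H3; rewrite h mulr0 => /esym/eqP; rewrite mulf_eq0 pnatr_eq0.
  by case/orP => [/eqP N0|/eqP //]; rewrite N0 in NP.
move: H3; rewrite h mulr0 => /eqP; rewrite mulf_eq0 pnatr_eq0 /=.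
by move/eqP.
Qed.


Lemma Nneg_count {R : realType} n (a : 'I_n -> R) :
  Nneg a = count (fun v => v < 0) [seq a i | i <- enum 'I_n].
Proof.
rewrite /Nneg count_map cardsE cardE /enum_mem size_filter /=.
rewrite count_filter; apply: eq_count => x /=; by rewrite andbT.
Qed.

Theorem lemma3p2 (R : realType) (n : nat) (a : 'I_n -> R) :
  (2 <= n)%N -> (2 <= Nneg a)%N ->
  ((Zdeg 3 (Jmul (Jmul (linvec a))))%:Z
     <= ('C(n.+1, 3))%:Z - (n * Nneg a)%:Z + n%:Z + cst n)%R.
Proof.
move=> hn hk.
have EZ : Zdeg 3 (Jmul (Jmul (linvec a))) = zc [seq a i | i <- enum 'I_n] 3 0.
  rewrite -Gzc /G /Zdeg -sum1_card big_mkcond /=.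
  apply: eq_bigr => m _; rewrite inE.
  case: eqP => hs //=.
  have hmu : (\sum_i ([ffun j => (m j : nat)] : expo n) i = 3)%N.
    transitivity (\sum_i (m i : nat))%N; last exact: hs.
    by apply: eq_bigr => i _; rewrite ffunE.
  rewrite coef_eq0 //.
  have -> : \sum_i (([ffun j => (m j : nat)] : expo n) i)%:R * a i = \sum_i (m i : nat)%:R * a i.
    by apply: eq_bigr => i _; rewrite ffunE.
  by [].
have EN := Nneg_count a.
have := main_seq (s := [seq a i | i <- enum 'I_n]).
rewrite size_map size_enum_ord -EN EZ /Bnd; apply => //.
Qed.
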